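(* Let $\mathbf v=(v_1,\dots,v_m)$ and $\mathbf k=(k_1,\dots,k_m)$ be $m$-tuples of positive integers with $\mathbf v\ge\mathbf k$, and let $\mathbf w=(w_1,\dots,w_n)$ and $\boldsymbol\ell=(\ell_1,\dots,\ell_n)$ be $n$-tuples of positive integers with $\mathbf w\ge\boldsymbol\ell$. Let $t$ be a positive integer. Suppose $\mathcal D_1$ is a ${\rm GC}(\mathbf v,\mathbf k,t)$ with $b$ blocks and $\mathcal D_2$ is a ${\rm GC}(\mathbf w,\boldsymbol\ell,t)$ with $c$ blocks. Then there exists a ${\rm GC}(\mathrm{cat}(\mathbf v,\mathbf w),\mathrm{cat}(\mathbf k,\boldsymbol\ell),t)$ with $bc$ blocks.
   Context: $\mathrm{cat}(\mathbf a,\mathbf b)$ denotes concatenation of tuples. For tuples $\mathbf a,\mathbf b$ of positive integers of the same length $p$ with $\mathbf b\le\mathbf a$ entrywise and $t\le\sum_i b_i$: let $Y_1,\dots,Y_p$ be pairwise disjoint sets with $|Y_i|=a_i$; a block is a $p$-tuple $(B_1,\dots,B_p)$ with $B_i\subseteq Y_i$, $|B_i|=b_i$; a $p$-tuple of sets $(T_1,\dots,T_p)$ is $(\mathbf a,\mathbf b,t)$-admissible if $T_i\subseteq Y_i$, $|T_i|\le b_i$ for all $i$ and $\sum|T_i|=t$, and is contained in a block if $T_i\subseteq B_i$ for all $i$. A generalized covering design ${\rm GC}(\mathbf a,\mathbf b,t)$ is a finite family (repetitions allowed) of blocks containing every admissible tuple in at least one block. *)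

(* Defs.v *)
From mathcomp Require Import all_boot.
Set Implicit Arguments. Unset Strict Implicit. Unset Printing Implicit Defensive.

(* The pairwise disjoint sets Y_i with |Y_i| = a_i are taken to be the
   ordinal types 'I_(a_i) indexed by i : 'I_p (disjointness is by tagging
   with the component index). *)
Definition settuple (a : seq nat) :=
  forall i : 'I_(size a), {set 'I_(nth 0 a i)}.

Definition is_block (a b : seq nat) (B : settuple a) : bool :=
  [forall i, #|B i| == nth 0 b i].

Definition admissible (a b : seq nat) (t : nat) (T : settuple a) : Prop :=
  (forall i, #|T i| <= nth 0 b i) /\ \sum_(i < size a) #|T i| = t.

Definition contained_in (a : seq nat) (T B : settuple a) : bool :=
  [forall i, T i \subset B i].

(* GC(a,b,t): a finite family (a seq, repetitions allowed) of blocks covering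
   every admissible tuple; the standing conditions on the parameters
   (positive integers, same length, b <= a entrywise, t <= sum b) are part
   of the definition. *)
Definition is_GC (a b : seq nat) (t : nat) (D : seq (settuple a)) : Prop :=
  [/\ [&& all (fun x => 0 < x) a, all (fun x => 0 < x) b, all2 leq b a
          & t <= sumn b],
      all (is_block b) D &
      forall T : settuple a, admissible b t T -> has (contained_in T) D].

(* Main.v *)
Require Import Defs.
From mathcomp Require Import all_boot zify.
Set Implicit Arguments. Unset Strict Implicit.

Lemma all2_nth (b a : seq nat) i : all2 leq b a -> nth 0 b i <= nth 0 a i.
Proof.
elim: b a i => [|x b IH] [|y a] [|i] //=; move/andP=> [h1 h2] //; exact: IH.
Qed.

Lemma all2_size (b a : seq nat) : all2 leq b a -> size b = size a.
Proof. elim: b a => [|x b IH] [|y a] //= /andP[_ h]; by rewrite (IH _ h). Qed.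

Lemma all2_cat (b a b' a' : seq nat) : all2 leq b a -> all2 leq b' a' -> all2 leq (b ++ b') (a ++ a').
Proof. elim: b a => [|x b IH] [|y a] //= /andP[h1 h2] h3; by rewrite h1 IH. Qed.

Lemma sumn_big (b : seq nat) : sumn b = \sum_(i < size b) nth 0 b i.
Proof. elim: b => [|x b IH] /=; first by rewrite big_ord0. by rewrite big_ord_recl /= IH. Qed.

Lemma sumn_big' (a b : seq nat) : size b = size a -> sumn b = \sum_(i < size a) nth 0 b i.
Proof. by move=> <-; exact: sumn_big. Qed.

Definition mem_nat (a : seq nat) (S : settuple a) (i n : nat) : bool :=
  [exists j : 'I_(size a), (val j == i) && [exists y in S j, val y == n]].

Lemma mem_natE (a : seq nat) (S : settuple a) (j : 'I_(size a)) n :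
  mem_nat S j n = [exists y in S j, val y == n].
Proof.
apply/existsP/idP => [[j' /andP[/eqP e h]]|h]; last by exists j; rewrite eqxx.
by have -> : j = j' by apply: val_inj.
Qed.

Lemma card_tr N M (H : N = M) (S : {set 'I_M}) :
  #|[set x : 'I_N | [exists y in S, val y == val x]]| = #|S|.
Proof.
subst; suff -> : [set x : 'I_M | [exists y in S, val y == val x]] = S by [].
apply/setP=> x; rewrite inE.
apply/existsP/idP => [[y /andP[h /eqP e]]|h]; last by exists x; rewrite h eqxx.
by have <- : y = x by apply: val_inj.
Qed.

Lemma ord_tr N M (H : N = M) (x : 'I_N) : exists y : 'I_M, val y = val x.
Proof. by subst; exists x. Qed.

Lemma extend (a b : seq nat) t : size b = size a -> all2 leq b a -> t <= sumn b ->
  forall (T : settuple a), (forall i, #|T i| <= nth 0 b i) -> \sum_(i<size a) #|T i| <= t ->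
  exists T' : settuple a, admissible b t T' /\ contained_in T T'.
Proof.
move=> sba lba tb.
suff H : forall n (T : settuple a), t - \sum_(i<size a) #|T i| = n ->
  (forall i, #|T i| <= nth 0 b i) -> \sum_(i<size a) #|T i| <= t ->
  exists T' : settuple a, admissible b t T' /\ contained_in T T'.
  by move=> T; exact: H.
elim=> [|n IH] T hn hb hs.
  exists T; split; last by apply/forallP=> i; exact: subxx.
  by split=> //; apply/eqP; rewrite eqn_leq hs -subn_eq0 hn.
have lt : \sum_(i<size a) #|T i| < t by rewrite -subn_gt0 hn.
have [/existsP[i hi]|nex] := boolP [exists i, #|T i| < nth 0 b i]; last first.
  exfalso; move: (leq_trans lt tb); rewrite (sumn_big' sba) ltnNge; move/negP; apply.
  apply: leq_sum => i _; move/existsPn: nex => /(_ i); by rewrite -leqNgt.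
have : 0 < #|~: T i|.
  have := cardsC (T i); rewrite card_ord => e.
  have := leq_trans hi (all2_nth i lba); move: e; lia.
move/card_gt0P=> [x]; rewrite inE => xT.
pose T' : settuple a := fun j => T j :|: [set y | (val j == val i) && (val y == val x)].
have cT : forall j, #|T' j| = #|T j| + (j == i).
  move=> j; case: (eqVneq j i) => [->|ne].
    rewrite /T' (_ : [set y | _ & _] = [set x]); last first.
      by apply/setP=> y; rewrite !inE eqxx /=.
    by rewrite setUC cardsU1 xT addnC.
  rewrite /T' (_ : [set y | _ & _] = set0) ?setU0 ?addn0 //.
  apply/setP=> y; rewrite !inE; case: (val j =P val i) => //= e.
  by case/negP: ne; apply/eqP; apply: val_inj.
have sT : \sum_(j<size a) #|T' j| = \sum_(j<size a) #|T j| + 1.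
  rewrite (eq_bigr _ (fun j _ => cT j)) big_split /=; congr (_ + _).
  rewrite (bigD1 i) //= eqxx big1 // => j; by case: eqP.
have [T'' [adm cont]] : exists T'' : settuple a, admissible b t T'' /\ contained_in T' T''.
  apply: IH.
  - by rewrite sT subnDA hn subn1.
  - move=> j; rewrite cT; case: (eqVneq j i) => [->|_]; [by rewrite addn1 | by rewrite addn0].
  - by rewrite sT addn1.
exists T''; split=> //; apply/forallP=> j; apply: subset_trans (forallP cont j).
exact: subsetUl.
Qed.

Lemma all_ap (S T R : Type) (p : pred R) (f : S -> T -> R) s t :
  all (fun x => all (fun y => p (f x y)) t) s -> all p [seq f x y | x <- s, y <- t].
Proof.
elim: s => //= x s IH /andP[h1 h2]; rewrite all_cat IH // andbT all_map; exact: h1.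
Qed.

Lemma has_ap (S T R : Type) (p : pred R) (f : S -> T -> R) s t :
  has (fun x => has (fun y => p (f x y)) t) s -> has p [seq f x y | x <- s, y <- t].
Proof.
elim: s => //= x s IH /orP[h|h]; rewrite has_cat; [apply/orP; left; rewrite has_map; exact: h | by rewrite IH ?orbT].
Qed.

Lemma card_memnat (a : seq nat) (S : settuple a) (j : 'I_(size a)) N (H : N = nth 0 a j) :
  #|[set x : 'I_N | mem_nat S j x]| = #|S j|.
Proof.
rewrite -(card_tr H); apply: eq_card => x; by rewrite !inE mem_natE.
Qed.

Lemma in_memnat (a : seq nat) (S : settuple a) (j : 'I_(size a)) N (x : 'I_N) :
  (x \in [set x : 'I_N | mem_nat S j x]) = [exists y in S j, val y == val x].
Proof. by rewrite inE mem_natE. Qed.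

Section S.
Variables v w : seq nat.

Definition splitL (T : settuple (v ++ w)) : settuple v :=
  fun j => [set x : 'I_(nth 0 v j) | mem_nat T (val j) (val x)].
Definition splitR (T : settuple (v ++ w)) : settuple w :=
  fun j => [set x : 'I_(nth 0 w j) | mem_nat T (size v + val j) (val x)].
Definition comb (B1 : settuple v) (B2 : settuple w) : settuple (v ++ w) :=
  fun i => [set x : 'I_(nth 0 (v ++ w) i) | if val i < size v then mem_nat B1 (val i) (val x)
     else mem_nat B2 (val i - size v) (val x)].

Lemma ltL (j : 'I_(size v)) : val j < size (v ++ w).
Proof. rewrite size_cat; exact: (leq_trans (ltn_ord j) (leq_addr _ _)). Qed.
Lemma ltR (j : 'I_(size w)) : size v + val j < size (v ++ w).
Proof. rewrite size_cat ltn_add2l; exact: ltn_ord. Qed.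

Lemma cardL T (j : 'I_(size v)) : #|splitL T j| = #|T (Ordinal (ltL j))|.
Proof.
apply: (@card_memnat _ T (Ordinal (ltL j))) => /=; by rewrite nth_cat ltn_ord.
Qed.
Lemma cardR T (j : 'I_(size w)) : #|splitR T j| = #|T (Ordinal (ltR j))|.
Proof.
apply: (@card_memnat _ T (Ordinal (ltR j))) => /=; by rewrite nth_cat ltnNge leq_addr /= addKn.
Qed.

Lemma sum_split (T : settuple (v ++ w)) :
  \sum_(i < size (v ++ w)) #|T i| =
  \sum_(j < size v) #|splitL T j| + \sum_(j < size w) #|splitR T j|.
Proof.
pose F n := #|[set x : 'I_(nth 0 (v ++ w) n) | mem_nat T n (val x)]|.
have FE : forall i : 'I_(size (v ++ w)), F i = #|T i|.
  by move=> i; exact: card_memnat.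
rewrite (eq_bigr (fun i : 'I_(size (v ++ w)) => F i)); last by move=> i _; rewrite FE.
rewrite (eq_bigr (fun j : 'I_(size v) => F j)); last first.
  by move=> j _; rewrite cardL -FE.
rewrite [X in _ = _ + X](eq_bigr (fun j : 'I_(size w) => F (size v + j))); last first.
  by move=> j _; rewrite cardR -FE.
rewrite -(big_mkord xpredT F) -(big_mkord xpredT F) -(big_mkord xpredT (fun j => F (size v + j))).
rewrite size_cat (big_cat_nat _ (n := size v)) ?leq_addr //=.
congr (_ + _).
rewrite -{1}(add0n (size v)) big_addn addKn.
by apply: eq_bigr => i _; rewrite addnC.
Qed.

End S.

Theorem theorem6p1 (v k w l : seq nat) (t : nat)
    (D1 : seq (settuple v)) (D2 : seq (settuple w)) :
  size k = size v -> size l = size w ->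
  all (fun x => 0 < x) v -> all (fun x => 0 < x) k ->
  all (fun x => 0 < x) w -> all (fun x => 0 < x) l ->
  all2 leq k v -> all2 leq l w -> 0 < t ->
  is_GC k t D1 -> is_GC l t D2 ->
  exists D : seq (settuple (v ++ w)),
    is_GC (k ++ l) t D /\ size D = size D1 * size D2.
Proof.
move=> sk sl pv pk pw pl kv lw t0 [/and4P[_ _ _ tk] bl1 cov1] [/and4P[_ _ _ tl] bl2 cov2].
exists [seq comb B1 B2 | B1 <- D1, B2 <- D2]; split; last by rewrite size_allpairs.
have nthL : forall (i : 'I_(size (v ++ w))) (hi : val i < size v),
   nth 0 (v ++ w) i = nth 0 v (Ordinal hi) /\ nth 0 (k ++ l) i = nth 0 k (Ordinal hi).
  by move=> i hi /=; rewrite !nth_cat sk hi.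
have ltR' : forall (i : 'I_(size (v ++ w))), ~~ (val i < size v) -> val i - size v < size w.
  move=> i; rewrite -leqNgt => h; move: h (ltn_ord i) (size_cat v w).
  rewrite -[\val i]/(nat_of_ord i); move: (nat_of_ord i) => n; lia.
have nthR : forall (i : 'I_(size (v ++ w))) (hi : ~~ (val i < size v)),
   nth 0 (v ++ w) i = nth 0 w (Ordinal (ltR' i hi)) /\
   nth 0 (k ++ l) i = nth 0 l (Ordinal (ltR' i hi)).
  by move=> i hi /=; rewrite !nth_cat sk (negbTE hi).
split.
- apply/and4P; split; rewrite ?all_cat ?pv ?pw ?pk ?pl //.
  + exact: all2_cat.
  + by rewrite sumn_cat (leq_trans tk) ?leq_addl ?leq_addr.
- apply: all_ap; apply: sub_all bl1 => B1 hB1; apply: sub_all bl2 => B2 hB2.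
  apply/forallP => i; case: (boolP (val i < size v)) => hi.
  + have [e1 e2] := nthL i hi.
    rewrite /comb (_ : [set x | _] = [set x : 'I_(nth 0 (v ++ w) i) | mem_nat B1 (Ordinal hi) (val x)]); last first.
      by apply/setP => x; rewrite !inE hi.
    by rewrite (card_memnat _ e1) e2; exact: (forallP hB1).
  + have [e1 e2] := nthR i hi.
    rewrite /comb (_ : [set x | _] = [set x : 'I_(nth 0 (v ++ w) i) | mem_nat B2 (Ordinal (ltR' i hi)) (val x)]); last first.
      by apply/setP => x; rewrite !inE (negbTE hi).
    by rewrite (card_memnat _ e1) e2; exact: (forallP hB2).
move=> T [Tb Ts].
have T1b : forall j, #|splitL T j| <= nth 0 k j.
  move=> j; rewrite cardL; apply: leq_trans (Tb _) _; by rewrite /= nth_cat sk ltn_ord.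
have T2b : forall j, #|splitR T j| <= nth 0 l j.
  move=> j; rewrite cardR; apply: leq_trans (Tb _) _.
  by rewrite /= nth_cat sk ltnNge leq_addr /= addKn.
have := Ts; rewrite sum_split => Ts'.
have [T1 [adm1 c1]] := extend sk kv tk T1b (leq_trans (leq_addr _ _) (eq_leq Ts')).
have [T2 [adm2 c2]] := extend sl lw tl T2b (leq_trans (leq_addl _ _) (eq_leq Ts')).
apply: has_ap; apply: sub_has (cov1 _ adm1) => B1 cB1; apply: sub_has (cov2 _ adm2) => B2 cB2.
apply/forallP => i; apply/subsetP => x xT; rewrite inE; case: ifP => hi.
- have [e1 _] := nthL i hi.
  have [y ey] := ord_tr e1 x.
  have yB : y \in B1 (Ordinal hi).
    apply: (subsetP (forallP cB1 _)); apply: (subsetP (forallP c1 _)).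
    rewrite /splitL inE /= ey; apply/existsP; exists i; rewrite eqxx /=.
    by apply/existsP; exists x; rewrite xT eqxx.
  apply/existsP; exists (Ordinal hi); rewrite eqxx /=; apply/existsP; exists y; by rewrite yB ey eqxx.
- have hi' : ~~ (val i < size v) by rewrite hi.
  have [e1 _] := nthR i hi'.
  have [y ey] := ord_tr e1 x.
  have yB : y \in B2 (Ordinal (ltR' i hi')).
    apply: (subsetP (forallP cB2 _)); apply: (subsetP (forallP c2 _)).
    rewrite /splitR inE /= ey subnKC; last by rewrite leqNgt.
    apply/existsP; exists i; rewrite eqxx /=.
    by apply/existsP; exists x; rewrite xT eqxx.
  apply/existsP; exists (Ordinal (ltR' i hi')); rewrite eqxx /=; apply/existsP; exists y; by rewrite yB ey eqxx.
Qed.
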